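(* Let $\mathcal{I}=\{(m,n)\in\mathbb{N}^2: m\le n\}$ and let $C=[0,1]^{\mathcal{I}}$ be the unit cube in the space $(\ell^\infty(\mathcal{I}),\|\cdot\|_\infty)$. Then there exist a non-expansive map $T:C\to C$ (i.e. $\|Tx-Ty\|_\infty\le\|x-y\|_\infty$ for all $x,y\in C$), points $x^0,y^0\in C$, and a sequence $(x^n)_{n\in\mathbb{N}}$ in $C$ satisfying, with the convention $Tx^{-1}=y^0$, $$x^n=\sum_{i=0}^n\pi^n_i\,Tx^{i-1}\quad\text{for all }n\ge1,$$ such that $\|x^m-x^n\|_\infty=d_{m,n}$ for all $m,n\in\mathbb{N}$. Moreover, if in addition condition (H) holds, then this sequence also satisfies $\|x^n-Tx^n\|_\infty=R_n:=\sum_{i=0}^n\pi^n_i\,d_{i-1,n}$ for all $n\in\mathbb{N}$.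
   Context: Let $\mathbb{N}=\{0,1,2,\dots\}$. Fix a sequence $(\pi^n)_{n\in\mathbb{N}}$ where each $\pi^n=(\pi^n_i)_{i\in\mathbb{N}}$ is a probability distribution on $\mathbb{N}$ with support contained in $\{0,\dots,n\}$, and $\pi^n\ne\pi^m$ for $m\ne n$. Define reals $d_{m,n}$ for $m,n\in\mathbb{N}\cup\{-1\}$ recursively as follows: $d_{-1,-1}=0$, $d_{-1,j}=d_{j,-1}=1$ for $j\in\mathbb{N}$, and for $m,n\in\mathbb{N}$, $$d_{m,n}=\min_{z\in\mathcal{F}_{m,n}}\sum_{i=0}^m\sum_{j=0}^n z_{i,j}\,d_{i-1,j-1},$$ where $\mathcal{F}_{m,n}$ is the set of arrays $z=(z_{i,j})_{0\le i\le m,\,0\le j\le n}$ with $z_{i,j}\ge0$, $\sum_{j=0}^n z_{i,j}=\pi^m_i$ for all $i\le m$, and $\sum_{i=0}^m z_{i,j}=\pi^n_j$ for all $j\le n$. Condition (H) means: for every $n\ge1$, $\pi^n_n>0$ and $0\le\pi^n_i\le\pi^{n-1}_i$ for all $i<n$. *)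

(* Defs.v *)
From mathcomp Require Import all_boot all_order all_algebra.
From mathcomp Require Import all_classical all_reals.
Set Implicit Arguments. Unset Strict Implicit. Unset Printing Implicit Defensive.
Import Order.TTheory GRing.Theory Num.Theory.
Local Open Scope ring_scope.
Local Open Scope classical_set_scope.

Section Defs.
Variable R : realType.

(* A family pi : nat -> nat -> R, pi n i = pi^n_i. *)

Definition coupling (pi : nat -> nat -> R) (m n : nat) : set (nat -> nat -> R) :=
  fun z =>
  (forall i j, (i <= m)%N -> (j <= n)%N -> 0 <= z i j) /\
  (forall i, (i <= m)%N -> \sum_(j < n.+1) z i j = pi m i) /\
  (forall j, (j <= n)%N -> \sum_(i < m.+1) z i j = pi n j).

(* Shifted table: Dtab pi m a b = d_{a-1,b-1} for all a <= m (and all b). *)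
Fixpoint Dtab (pi : nat -> nat -> R) (m : nat) : nat -> nat -> R :=
  match m with
  | 0 => fun _ b => if b is b'.+1 then 1 else 0
  | m'.+1 =>
      fun a b =>
        if (a <= m')%N then Dtab pi m' a b
        else if b is b'.+1 then
          inf [set \sum_(i < m'.+1) \sum_(j < b'.+1) z i j * Dtab pi m' i j
              | z in coupling pi m' b']
        else 1
  end.

(* dshift pi a b = d_{a-1,b-1}, for a b : nat (so indices range over N ∪ {-1}). *)
Definition dshift (pi : nat -> nat -> R) (a b : nat) : R := Dtab pi a a b.

Definition dmn (pi : nat -> nat -> R) (m n : nat) : R := dshift pi m.+1 n.+1.

Definition Idx := {p : nat * nat | (p.1 <= p.2)%N}.

Definition inC (x : Idx -> R) : Prop := forall k, 0 <= x k <= 1.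

Definition dinf (x y : Idx -> R) : R := sup [set `|x k - y k| | k in [set: Idx]].

Definition nonexpansive_on_C (T : (Idx -> R) -> (Idx -> R)) : Prop :=
  forall x y, inC x -> inC y -> dinf (T x) (T y) <= dinf x y.

Definition condH (pi : nat -> nat -> R) : Prop :=
  forall n, (1 <= n)%N -> 0 < pi n n /\ forall i, (i < n)%N -> 0 <= pi n i <= pi n.-1 i.

End Defs.

(* Main.v *)
Require Import Defs.
From mathcomp Require Import all_boot all_order all_algebra.
From mathcomp Require Import all_classical all_reals.
From mathcomp Require Import lra.
Import Order.TTheory GRing.Theory Num.Theory.
Local Open Scope ring_scope.
Local Open Scope classical_set_scope.

Section Aux.
Variable R : realType.

Lemma inf_le_img {T} (A : set T) (f : T -> R) a L :
  (forall t, A t -> L <= f t) -> A a -> inf [set f t | t in A] <= f a.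
Proof.
move=> HL Aa; apply: ge_inf; last by exists a.
by exists L => _ [t At <-]; apply: HL.
Qed.

Lemma le_inf_img {T} (A : set T) (f : T -> R) a L :
  A a -> (forall t, A t -> L <= f t) -> L <= inf [set f t | t in A].
Proof.
move=> Aa HL; apply: lb_le_inf; first by exists (f a), a.
by move=> _ [t At <-]; apply: HL.
Qed.

Lemma le_sup_img {T} (A : set T) (f : T -> R) a U :
  (forall t, A t -> f t <= U) -> A a -> f a <= sup [set f t | t in A].
Proof.
move=> HU Aa; apply: ub_le_sup; last by exists a.
by exists U => _ [t At <-]; apply: HU.
Qed.

Lemma sup_le_img {T} (A : set T) (f : T -> R) a U :
  A a -> (forall t, A t -> f t <= U) -> sup [set f t | t in A] <= U.
Proof.
move=> Aa HU; apply: ge_sup; first by exists (f a), a.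
by move=> _ [t At <-]; apply: HU.
Qed.


Definition sublin (p : (nat -> R) -> R) :=
  (forall x y, p (fun i => x i + y i) <= p x + p y) /\
  (forall t x, 0 <= t -> p (fun i => t * x i) = t * p x).

Definition depK (K : nat) (p : (nat -> R) -> R) :=
  forall x y, (forall i, (i < K)%N -> x i = y i) -> p x = p y.

Definition upd (K : nat) (x : nat -> R) (t : R) := fun i => if i == K then t else x i.

Lemma HB K : forall p, sublin p -> depK K p -> forall x0 : nat -> R, exists b : nat -> R,
  (forall x : nat -> R, \sum_(i < K) b i * x i <= p x) /\ \sum_(i < K) b i * x0 i = p x0.
Proof.
elim: K => [|K IH] p [padd phom] pdep x0.
  have p0 x : p x = 0.
    rewrite (pdep x (fun i => 0 * x i)) // phom //; first by rewrite mul0r.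
  by exists (fun _ => 0); split => [x|]; rewrite big_ord0 !p0.
pose phi t := p (upd K x0 t).
pose t0 := x0 K.
have updK x : upd K x (x K) = x by apply: funext => i; rewrite /upd; case: eqP => // ->.
have phi0 : phi t0 = p x0 by rewrite /phi /t0 updK.
have slope g h : 0 < g -> 0 < h ->
    h * (phi t0 - phi (t0 - g)) <= g * (phi (t0 + h) - phi t0).
  move=> g0 h0.
  have E : (fun i => (g + h) * x0 i) =
      (fun i => (fun i => h * upd K x0 (t0 - g) i) i + (fun i => g * upd K x0 (t0 + h) i) i).
    apply: funext => i; rewrite /upd; case: eqP => [->|_]; rewrite /t0; lra.
  have := padd (fun i => h * upd K x0 (t0 - g) i) (fun i => g * upd K x0 (t0 + h) i).
  have hg := ltW g0; have hh := ltW h0; have ghp := addr_ge0 hg hh.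
  rewrite -E !phom // -phi0 -/(phi _) -/(phi _) -/(phi _).
  lra.
pose S := [set (phi (t0 + h) - phi t0) / h | h in [set h : R | 0 < h]].
pose s := inf S.
have sub t : phi t0 + s * (t - t0) <= phi t.
  have [lt|gt|tE] := ltgtP t t0.
  - have g0 : 0 < t0 - t by lra.
    suff : (phi t0 - phi t) / (t0 - t) <= s.
      rewrite ler_pdivrMr //; lra.
    apply: (le_inf_img _ _ 1) => [/=|h h0]; first lra.
    rewrite ler_pdivrMr // mulrAC ler_pdivlMr //.
    have := slope (t0 - t) h g0 h0; rewrite (_ : t0 - (t0 - t) = t); lra.
  - have h0 : 0 < t - t0 by lra.
    have : s <= (phi (t0 + (t - t0)) - phi t0) / (t - t0).
      apply: (inf_le_img _ _ _ (phi t0 - phi (t0 - 1))) => //= h h0'.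
      rewrite ler_pdivlMr //.
      have := slope 1 h ltr01 h0'; lra.
    rewrite ler_pdivlMr // (_ : t0 + (t - t0) = t); last lra.
    lra.
  - by rewrite tE subrr mulr0 addr0.
pose p' y := inf [set p (upd K y t) - s * t | t in [set: R]].
have lbp' y t : phi t0 - s * t0 - p (fun i => if i == K then 0 else x0 i - y i)
      <= p (upd K y t) - s * t.
  have E : upd K x0 t = (fun i => upd K y t i + (fun i => if i == K then 0 else x0 i - y i) i).
    by apply: funext => i; rewrite /upd; case: eqP => _; lra.
  have := padd (upd K y t) (fun i => if i == K then 0 else x0 i - y i).
  rewrite -E -/(phi t); have := sub t; lra.
have p'le y t : p' y <= p (upd K y t) - s * t.
  by apply: (inf_le_img _ _ _ _ (fun u _ => lbp' y u)).
have p'ge y L : (forall t, L <= p (upd K y t) - s * t) -> L <= p' y.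
  by move=> HL; apply: (le_inf_img _ _ 0) => // u _; apply: HL.
have p'add : forall x y, p' (fun i => x i + y i) <= p' x + p' y.
  move=> x y.
  suff: forall t', p' (fun i => x i + y i) - (p (upd K y t') - s * t') <= p' x.
    move=> H; suff: p' (fun i => x i + y i) - p' x <= p' y by lra.
    by apply: p'ge => t'; have := H t'; lra.
  move=> t'; apply: p'ge => t.
  have := p'le (fun i => x i + y i) (t + t').
  have := padd (upd K x t) (upd K y t').
  have -> : (fun i => upd K x t i + upd K y t' i) = upd K (fun i => x i + y i) (t + t').
    by apply: funext => i; rewrite /upd; case: eqP.
  lra.
have p'hom : forall t x, 0 <= t -> p' (fun i => t * x i) = t * p' x.
  move=> l x; rewrite le_eqVlt => /orP[/eqP<-|l0].
    rewrite mul0r; apply/eqP; rewrite eq_le; apply/andP; split.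
      have := p'le (fun i => 0 * x i) 0.
      have -> : upd K (fun i => 0 * x i) 0 = (fun i => 0 * x i).
        by apply: funext => i; rewrite /upd; case: eqP => _ //; rewrite mul0r.
      by rewrite phom // !mul0r; lra.
    have := p'add (fun i => 0 * x i) (fun i => 0 * x i).
    have -> : (fun i => (fun i => 0 * x i) i + (fun i => 0 * x i) i) = (fun i => 0 * x i).
      by apply: funext => i; rewrite mul0r addr0.
    lra.
  apply/eqP; rewrite eq_le; apply/andP; split.
    rewrite -ler_pdivrMl //; apply: p'ge => t.
    rewrite ler_pdivrMl //.
    have := p'le (fun i => l * x i) (l * t).
    have -> : upd K (fun i => l * x i) (l * t) = (fun i => l * upd K x t i).
      by apply: funext => i; rewrite /upd; case: eqP.
    rewrite phom; last exact: ltW.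
    by rewrite mulrBr [l * (s * t)]mulrCA.
  apply: p'ge => t.
  have := p'le x (t / l).
  have -> : p (upd K (fun i => l * x i) t) = l * p (upd K x (t / l)).
    rewrite -phom ?ltW //; congr p; apply: funext => i; rewrite /upd; case: eqP => // _.
    by rewrite mulrC divfK // gt_eqF.
  move=> H; rewrite (_ : s * t = l * (s * (t / l))); last first.
    by rewrite mulrCA [l * (t / l)]mulrCA mulfV ?mulr1 // gt_eqF.
  rewrite -mulrBr; apply: ler_wpM2l; [exact: ltW | exact: H].
have p'dep : depK K p'.
  move=> x y Hxy; rewrite /p'.
  have -> : (fun t => p (upd K x t) - s * t) = (fun t => p (upd K y t) - s * t) => //.
  apply: funext => t; congr (_ - _); apply: pdep => i Hi; rewrite /upd.
  case: eqP => // /eqP iK; apply: Hxy; rewrite ltn_neqAle iK -ltnS //.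
have [b' [Hb'1 Hb'2]] := IH p' (conj p'add p'hom) p'dep x0.
exists (fun i => if i == K then s else b' i); split.
  move=> x; rewrite big_ord_recr /= eqxx.
  rewrite (eq_bigr (fun i : 'I_K => b' i * x i)); last first.
    by move=> i _; rewrite ifF // ltn_eqF.
  have := Hb'1 x; have := p'le x (x K); rewrite updK; lra.
rewrite big_ord_recr /= eqxx.
rewrite (eq_bigr (fun i : 'I_K => b' i * x0 i)); last first.
  by move=> i _; rewrite ifF // ltn_eqF.
rewrite Hb'2.
have -> : p' x0 = phi t0 - s * t0.
  apply/eqP; rewrite eq_le; apply/andP; split.
    by have := p'le x0 t0; rewrite /phi.
  by apply: p'ge => t; have := sub t; rewrite /phi; lra.
rewrite phi0 /t0; lra.
Qed.

End Aux.
Arguments inf_le_img {R T A f a} L.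
Arguments le_inf_img {R T A f} a {L}.
Arguments le_sup_img {R T A f a} U.
Arguments sup_le_img {R T A f} a {U}.
Arguments HB {R}.
Arguments sublin {R}.
Arguments depK {R}.



Section Transport.
Variable R : realType.
Variable pi : nat -> nat -> R.
Hypothesis pi_ge0 : forall n i, 0 <= pi n i.
Hypothesis pi_sum1 : forall n, \sum_(i < n.+1) pi n i = 1.

Lemma sum_delta N (f : nat -> R) a : (a < N)%N ->
  (forall k, (k < N)%N -> k != a -> f k = 0) ->
  \sum_(k < N) f k = f a.
Proof.
move=> aN Hf; rewrite (bigD1 (Ordinal aN)) //= big1 ?addr0 // => k /= kn.
by apply: Hf => //; apply: contra kn => /eqP ka; apply/eqP/val_inj.
Qed.

Variables (m n : nat) (c : nat -> nat -> R).
Hypothesis c_ge0 : forall i j, (i <= m)%N -> (j <= n)%N -> 0 <= c i j.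
Hypothesis c_le1 : forall i j, (i <= m)%N -> (j <= n)%N -> c i j <= 1.

Definition cost (z : nat -> nat -> R) := \sum_(i < m.+1) \sum_(j < n.+1) z i j * c i j.
Definition tc := inf [set cost z | z in coupling pi m n].
Definition rs (z : nat -> nat -> R) i := \sum_(j < n.+1) z i j.
Definition cs (z : nat -> nat -> R) j := \sum_(i < m.+1) z i j.

Lemma sum_rs z : \sum_(i < m.+1) rs z i = \sum_(j < n.+1) cs z j.
Proof. by rewrite /rs /cs exchange_big. Qed.

Lemma coupling_prod : coupling pi m n (fun i j => pi m i * pi n j).
Proof.
split; [by move=> i j _ _; rewrite mulr_ge0 |split].
  by move=> i _; rewrite -mulr_sumr pi_sum1 mulr1.
by move=> j _; rewrite -mulr_suml pi_sum1 mul1r.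
Qed.

Lemma cost_ge0 z : (forall i j, (i <= m)%N -> (j <= n)%N -> 0 <= z i j) -> 0 <= cost z.
Proof.
move=> Hz; apply: sumr_ge0 => i _; apply: sumr_ge0 => j _.
by apply: mulr_ge0; [apply: Hz|apply: c_ge0]; exact: leq_ord.
Qed.

Lemma tc_le z : coupling pi m n z -> tc <= cost z.
Proof. move=> Cz; rewrite /tc; apply: (inf_le_img 0) => // t [Ht _]; exact: cost_ge0. Qed.

Lemma tc_ge L : (forall z, coupling pi m n z -> L <= cost z) -> L <= tc.
Proof. by move=> H; rewrite /tc; apply: (le_inf_img _ coupling_prod). Qed.

Lemma tc_ge0 : 0 <= tc.
Proof. by apply: tc_ge => z [Hz _]; apply: cost_ge0. Qed.

Lemma tc_le1 : tc <= 1.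
Proof.
apply: (le_trans (tc_le _ coupling_prod)).
rewrite /cost -(pi_sum1 m); apply: ler_sum => i _.
apply: (@le_trans _ _ (\sum_(j < n.+1) pi m i * pi n j)).
  apply: ler_sum => j _; apply: ler_piMr; first by rewrite mulr_ge0.
  by apply: c_le1; exact: leq_ord.
by rewrite -mulr_sumr pi_sum1 mulr1.
Qed.

Lemma pot_le (u v : nat -> R) :
  (forall i j, (i <= m)%N -> (j <= n)%N -> u i - v j <= c i j) ->
  \sum_(i < m.+1) pi m i * u i - \sum_(j < n.+1) pi n j * v j <= tc.
Proof.
move=> Huv; apply: tc_ge => z [Hz [Hr Hc]].
have -> : \sum_(i < m.+1) pi m i * u i = \sum_(i < m.+1) \sum_(j < n.+1) z i j * u i.
  by apply: eq_bigr => i _; rewrite -Hr ?leq_ord // mulr_suml.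
have -> : \sum_(j < n.+1) pi n j * v j = \sum_(i < m.+1) \sum_(j < n.+1) z i j * v j.
  by rewrite exchange_big; apply: eq_bigr => j _; rewrite -Hc ?leq_ord // mulr_suml.
rewrite -sumrB; apply: ler_sum => i _; rewrite -sumrB; apply: ler_sum => j _.
rewrite -mulrBr; apply: ler_wpM2l; first by apply: Hz; exact: leq_ord.
by apply: Huv; exact: leq_ord.
Qed.

Definition sc (a mu : R) := if a <= mu then 1 else mu / a.

Lemma sc_prop a mu : 0 <= a -> 0 <= mu ->
  [/\ 0 <= sc a mu, sc a mu <= 1, a * sc a mu <= mu,
      a - a * sc a mu <= `|mu - a| & mu - a * sc a mu <= `|mu - a|].
Proof.
move=> a0 mu0; rewrite /sc; case: ifP => h.
  rewrite mulr1 subrr normr_ge0; split => //; exact: ler_norm.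
have lt : mu < a by rewrite ltNge h.
have apos : 0 < a by apply: le_lt_trans lt.
have E : a * (mu / a) = mu by rewrite mulrCA mulfV ?mulr1 // gt_eqF.
rewrite E subrr normr_ge0 divr_ge0 // ler_pdivrMr // mul1r (ltW lt); split => //.
by rewrite distrC; apply: ler_norm.
Qed.

Lemma complete (w : nat -> nat -> R) :
  (forall i j, (i <= m)%N -> (j <= n)%N -> 0 <= w i j) ->
  (forall i, (i <= m)%N -> rs w i <= pi m i) ->
  (forall j, (j <= n)%N -> cs w j <= pi n j) ->
  exists z, coupling pi m n z /\ cost z <= cost w + (1 - \sum_(i < m.+1) rs w i).
Proof.
move=> Hw Hr Hc.
pose del := 1 - \sum_(i < m.+1) rs w i.
pose a i := pi m i - rs w i.
pose b j := pi n j - cs w j.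
have a0 i : (i <= m)%N -> 0 <= a i by move=> /Hr; rewrite subr_ge0.
have b0 j : (j <= n)%N -> 0 <= b j by move=> /Hc; rewrite subr_ge0.
have suma : \sum_(i < m.+1) a i = del by rewrite sumrB pi_sum1.
have sumb : \sum_(j < n.+1) b j = del by rewrite sumrB pi_sum1 -sum_rs.
have del0 : 0 <= del by rewrite -suma; apply: sumr_ge0 => i _; apply: a0; exact: leq_ord.
have adel i : (i <= m)%N -> a i * (del / del) = a i.
  move=> im; have [dE|dn0] := eqVneq del 0; last by rewrite mulfV ?mulr1.
  rewrite dE mul0r mulr0.
  have := @psumr_eq0P _ _ predT (fun i : 'I_m.+1 => a i) (fun i _ => a0 i (leq_ord i)) (etrans suma dE).
  by move=> /(_ (Ordinal (im : (i < m.+1)%N))) ->.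
have bdel j : (j <= n)%N -> b j * (del / del) = b j.
  move=> jn; have [dE|dn0] := eqVneq del 0; last by rewrite mulfV ?mulr1.
  rewrite dE mul0r mulr0.
  have := @psumr_eq0P _ _ predT (fun j : 'I_n.+1 => b j) (fun j _ => b0 j (leq_ord j)) (etrans sumb dE).
  by move=> /(_ (Ordinal (jn : (j < n.+1)%N))) ->.
exists (fun i j => w i j + a i * (b j / del)); split; [split; [|split]|].
- move=> i j im jn; apply: addr_ge0; first exact: Hw.
  by apply: mulr_ge0; [apply: a0|apply: divr_ge0 => //; apply: b0].
- move=> i im; rewrite big_split /= -mulr_sumr -mulr_suml sumb adel //.
  by rewrite /a -/(rs w i); lra.
- move=> j jn; rewrite big_split /= -mulr_suml suma mulrCA bdel //.
  by rewrite /b -/(cs w j); lra.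
rewrite /cost.
under eq_bigr do under eq_bigr do rewrite mulrDl.
under eq_bigr do rewrite big_split /=.
rewrite big_split /= lerD2l.
apply: (@le_trans _ _ (\sum_(i < m.+1) \sum_(j < n.+1) a i * (b j / del))).
  apply: ler_sum => i _; apply: ler_sum => j _; apply: ler_piMr.
    by apply: mulr_ge0; [apply: a0|apply: divr_ge0 => //; apply: b0]; exact: leq_ord.
  by apply: c_le1; exact: leq_ord.
have E : forall i : 'I_m.+1, \sum_(j < n.+1) a i * (b j / del) = a i * (del / del).
  by move=> i; rewrite -mulr_sumr -mulr_suml sumb.
rewrite (eq_bigr _ (fun i _ => E i)) -mulr_suml suma.
have [dE|dn0] := eqVneq del 0; first by rewrite dE !mul0r.
by rewrite mulfV ?mulr1.
Qed.

Lemma repair z : (forall i j, 0 <= z i j) ->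
  exists z', coupling pi m n z' /\
    cost z' <= cost z + (\sum_(i < m.+1) `|pi m i - rs z i| + \sum_(j < n.+1) `|pi n j - cs z j|).
Proof.
move=> Hz.
have rs0 y i : (forall i j, 0 <= y i j) -> 0 <= rs y i by move=> Hy; apply: sumr_ge0.
have cs0 y j : (forall i j, 0 <= y i j) -> 0 <= cs y j by move=> Hy; apply: sumr_ge0.
pose rho i := sc (rs z i) (pi m i).
pose w1 i j := z i j * rho i.
have rho_p i := @sc_prop (rs z i) (pi m i) (rs0 z i Hz) (pi_ge0 m i).
have Hw1 i j : 0 <= w1 i j <= z i j.
  have [r0 r1 _ _ _] := rho_p i.
  by rewrite mulr_ge0 //= ler_piMr.
have w10 : forall i j, 0 <= w1 i j by move=> i j; case/andP: (Hw1 i j).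
pose kap j := sc (cs w1 j) (pi n j).
pose w2 i j := w1 i j * kap j.
have kap_p j := @sc_prop (cs w1 j) (pi n j) (cs0 w1 j w10) (pi_ge0 n j).
have Hw2 i j : 0 <= w2 i j <= w1 i j.
  have [k0 k1 _ _ _] := kap_p j.
  by rewrite mulr_ge0 //= ler_piMr.
have rsw1 i : rs w1 i = rs z i * rho i by rewrite /rs -mulr_suml.
have csw2 j : cs w2 j = cs w1 j * kap j by rewrite /cs -mulr_suml.
have [z' [Cz' Hz']] : exists z', coupling pi m n z' /\ cost z' <= cost w2 + (1 - \sum_(i < m.+1) rs w2 i).
  apply: complete.
  - by move=> i j _ _; case/andP: (Hw2 i j).
  - move=> i _; apply: le_trans (_ : rs w1 i <= _).
      by apply: ler_sum => j _; case/andP: (Hw2 i j).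
    by rewrite rsw1; have [] := rho_p i.
  - by move=> j _; rewrite csw2; have [] := kap_p j.
exists z'; split => //; apply: le_trans Hz' _; apply: lerD.
  apply: ler_sum => i _; apply: ler_sum => j _; apply: ler_wpM2r.
    by apply: c_ge0; exact: leq_ord.
  by case/andP: (Hw2 i j) => _ h; apply: le_trans h _; case/andP: (Hw1 i j).
rewrite sum_rs -(pi_sum1 n) -sumrB.
have E : \sum_(j < n.+1) (cs z j - cs w1 j) = \sum_(i < m.+1) (rs z i - rs w1 i).
  by rewrite !sumrB sum_rs [X in _ = _ - X]sum_rs.
apply: (@le_trans _ _ (\sum_(j < n.+1) (`|pi n j - cs z j| + (cs z j - cs w1 j)))).
  apply: ler_sum => j _.
  have [_ _ _ _ h] := kap_p j; rewrite csw2; apply: le_trans h _.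
  have cw : cs w1 j <= cs z j by apply: ler_sum => i _; case/andP: (Hw1 i j).
  have := ler_normD (pi n j - cs z j) (cs z j - cs w1 j).
  rewrite (ger0_norm (x := cs z j - cs w1 j)) ?subr_ge0 //.
  by rewrite (_ : pi n j - cs z j + (cs z j - cs w1 j) = pi n j - cs w1 j) //; lra.
rewrite big_split /= E addrC lerD2r; apply: ler_sum => i _.
by rewrite rsw1; have [] := rho_p i.
Qed.


Definition NN := [set z : nat -> nat -> R | forall i j, 0 <= z i j].
Definition err (x : nat -> R) (z : nat -> nat -> R) :=
  \sum_(i < m.+1) `|x i - rs z i| + \sum_(j < n.+1) `|x (m.+1 + j)%N - cs z j|.
Definition FF x z := cost z + err x z.
Definition PP x := inf [set FF x z | z in NN].

Lemma FF_ge0 x z : NN z -> 0 <= FF x z.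
Proof.
move=> Hz; apply: addr_ge0; first by apply: cost_ge0 => i j _ _; apply: Hz.
by apply: addr_ge0; apply: sumr_ge0 => i _; apply: normr_ge0.
Qed.

Lemma PP_le x z : NN z -> PP x <= FF x z.
Proof. by move=> Hz; rewrite /PP; apply: (inf_le_img 0) => // t; apply: FF_ge0. Qed.

Lemma PP_ge x L : (forall z, NN z -> L <= FF x z) -> L <= PP x.
Proof.
move=> H; rewrite /PP; apply: (le_inf_img (fun _ _ => 0)) => // i j /=.
Qed.

Lemma FF_add x y z z' :
  FF (fun i => x i + y i) (fun i j => z i j + z' i j) <= FF x z + FF y z'.
Proof.
rewrite /FF /cost /err.
have -> : \sum_(i < m.+1) \sum_(j < n.+1) (z i j + z' i j) * c i j =
   \sum_(i < m.+1) \sum_(j < n.+1) z i j * c i j + \sum_(i < m.+1) \sum_(j < n.+1) z' i j * c i j.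
  by rewrite -big_split; apply: eq_bigr => i _; rewrite -big_split; apply: eq_bigr => j _; rewrite mulrDl.
suff: \sum_(i < m.+1) `|x i + y i - rs (fun i0 j => z i0 j + z' i0 j) i| +
  \sum_(j < n.+1) `|x (m.+1 + j)%N + y (m.+1 + j)%N - cs (fun i j0 => z i j0 + z' i j0) j| <=
  (\sum_(i < m.+1) `|x i - rs z i| + \sum_(j < n.+1) `|x (m.+1 + j)%N - cs z j|) +
  (\sum_(i < m.+1) `|y i - rs z' i| + \sum_(j < n.+1) `|y (m.+1 + j)%N - cs z' j|) by lra.
rewrite addrACA -!big_split /=; apply: lerD; apply: ler_sum => i _.
  rewrite /rs big_split /= (_ : forall a b c d : R, a + b - (c + d) = (a - c) + (b - d)).
    exact: ler_normD.
  by move=> *; lra.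
rewrite /cs big_split /= (_ : forall a b c d : R, a + b - (c + d) = (a - c) + (b - d)).
  exact: ler_normD.
by move=> *; lra.
Qed.

Lemma FF_scale t x z : 0 <= t ->
  FF (fun i => t * x i) (fun i j => t * z i j) = t * FF x z.
Proof.
move=> t0; rewrite /FF /cost /err /rs /cs !mulrDr !mulr_sumr.
congr (_ + (_ + _)).
- by apply: eq_bigr => i _; rewrite mulr_sumr; apply: eq_bigr => j _; rewrite mulrA.
- apply: eq_bigr => i _; rewrite -mulr_sumr -mulrBr normrM ger0_norm //.
- apply: eq_bigr => i _; rewrite -mulr_sumr -mulrBr normrM ger0_norm //.
Qed.

Lemma PP_sublin : sublin PP.
Proof.
split.
  move=> x y.
  suff H : forall z', NN z' -> PP (fun i => x i + y i) - FF y z' <= PP x.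
    suff : PP (fun i => x i + y i) - PP x <= PP y by lra.
    by apply: PP_ge => z' Hz'; have := H z' Hz'; lra.
  move=> z' Hz'; apply: PP_ge => z Hz.
  have := PP_le (fun i => x i + y i) (fun i j => z i j + z' i j).
  have := FF_add x y z z'.
  have : NN (fun i j => z i j + z' i j) by move=> i j; apply: addr_ge0.
  move=> H1 H2 H3; have := H3 H1; lra.
move=> t x; rewrite le_eqVlt => /orP[/eqP<-|t0].
  rewrite mul0r; apply/eqP; rewrite eq_le; apply/andP; split; last first.
    by apply: PP_ge => z Hz; apply: FF_ge0.
  have := PP_le (fun i => 0 * x i) (fun i j => 0 * (fun _ _ => 0) i j).
  rewrite FF_scale // => H; apply: le_trans (H _) _; last by rewrite mul0r.
  by move=> i j /=; rewrite mul0r.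
apply/eqP; rewrite eq_le; apply/andP; split.
  rewrite -ler_pdivrMl //; apply: PP_ge => z Hz.
  rewrite ler_pdivrMl // -FF_scale; last exact: ltW.
  apply: PP_le => i j; apply: mulr_ge0; [exact: ltW | exact: Hz].
apply: PP_ge => z Hz.
have -> : z = (fun i j => t * (fun i j => z i j / t) i j).
  by apply: funext => i; apply: funext => j; rewrite mulrCA mulfV ?mulr1 // gt_eqF.
rewrite FF_scale; last exact: ltW.
apply: ler_wpM2l; first exact: ltW.
by apply: PP_le => i j /=; apply: divr_ge0 => //; apply: ltW.
Qed.

Lemma PP_dep : depK (m.+1 + n.+1) PP.
Proof.
move=> x y Hxy; rewrite /PP /FF /err.
have -> : (fun z => cost z + (\sum_(i < m.+1) `|x i - rs z i| +
                  \sum_(j < n.+1) `|x (m.+1 + j)%N - cs z j|)) =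
          (fun z => cost z + (\sum_(i < m.+1) `|y i - rs z i| +
                  \sum_(j < n.+1) `|y (m.+1 + j)%N - cs z j|)) => //.
apply: funext => z; congr (_ + (_ + _)); apply: eq_bigr => i _; rewrite Hxy //.
  by apply: ltn_addr.
by rewrite ltn_add2l.
Qed.

Theorem TD : exists u v : nat -> R,
  (forall i j, (i <= m)%N -> (j <= n)%N -> u i - v j <= c i j) /\
  tc <= \sum_(i < m.+1) pi m i * u i - \sum_(j < n.+1) pi n j * v j.
Proof.
pose x0 := fun k => if (k < m.+1)%N then pi m k else pi n (k - m.+1)%N.
have [b [Hb1 Hb2]] := HB _ _ PP_sublin PP_dep x0.
have split_sum (x : nat -> R) : \sum_(k < m.+1 + n.+1) b k * x k =
    \sum_(i < m.+1) b i * x i + \sum_(j < n.+1) b (m.+1 + j)%N * x (m.+1 + j)%N.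
  by rewrite big_split_ord.
exists b, (fun j => - b (m.+1 + j)%N); split.
  move=> i j im jn.
  pose x := fun k => (k == i)%:R + (k == (m.+1 + j)%N)%:R : R.
  have := Hb1 x; rewrite split_sum.
  have E1 : \sum_(i0 < m.+1) b i0 * x i0 = b i.
    rewrite (@sum_delta _ (fun k => b k * x k) i) /x ?eqxx; last 2 first.
    - by rewrite ltnS.
    - move=> k kn /negbTE ->; rewrite (_ : (k == (m.+1 + j)%N) = false) ?addr0 ?mulr0 //.
      by apply/negbTE; rewrite neq_ltn ltn_addr.
    rewrite (_ : (i == (m.+1 + j)%N) = false) ?addr0 ?mulr1 //.
    by apply/negbTE; rewrite neq_ltn ltn_addr.
  have E2 : \sum_(j0 < n.+1) b (m.+1 + j0)%N * x (m.+1 + j0)%N = b (m.+1 + j)%N.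
    rewrite (@sum_delta _ (fun k => b (m.+1 + k)%N * x (m.+1 + k)%N) j) /x ?eqxx; last 2 first.
    - by rewrite ltnS.
    - move=> k kn kj; rewrite eqn_add2l (negbTE kj).
      rewrite (_ : ((m.+1 + k)%N == i) = false) ?addr0 ?mulr0 //.
      by apply/negbTE; rewrite eq_sym neq_ltn (leq_trans (_ : i < m.+1)%N) ?leq_addr.
    rewrite (_ : ((m.+1 + j)%N == i) = false) ?add0r ?mulr1 //.
    by apply/negbTE; rewrite eq_sym neq_ltn (leq_trans (_ : i < m.+1)%N) ?leq_addr.
  rewrite E1 E2 opprK => H; apply: le_trans H _.
  pose del := fun a b => ((a == i) && (b == j))%:R : R.
  have Hdel : NN del by move=> a1 b1; rewrite /del ler0n.
  apply: le_trans (PP_le x del Hdel) _.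
  rewrite /FF.
  have -> : cost del = c i j.
    rewrite /cost (@sum_delta _ (fun a => \sum_(b0 < n.+1) del a b0 * c a b0) i) ?ltnS //.
      rewrite (@sum_delta _ (fun b0 => del i b0 * c i b0) j) ?ltnS //.
        by rewrite /del !eqxx mul1r.
      by move=> k _ /negbTE kj; rewrite /del kj andbF mul0r.
    move=> k _ /negbTE ki; apply: big1 => b0 _; by rewrite /del ki mul0r.
  suff -> : err x del = 0 by rewrite addr0.
  rewrite /err big1 ?add0r; last first.
    move=> i0 _; apply/eqP; rewrite normr_eq0 subr_eq0; apply/eqP.
    rewrite /x /rs (_ : ((i0 : nat) == (m.+1 + j)%N) = false) ?addr0; last first.
      by apply/negbTE; rewrite neq_ltn ltn_addr.
    have [->|ii] := eqVneq (i0 : nat) i.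
      rewrite (@sum_delta _ (fun b0 => del i b0) j) ?ltnS //; first by rewrite /del !eqxx.
      by move=> k _ /negbTE kj; rewrite /del kj andbF.
    by rewrite big1 // => k _; rewrite /del (negbTE ii).
  apply: big1 => i0 _; apply/eqP; rewrite normr_eq0 subr_eq0; apply/eqP.
  rewrite /x /cs (_ : ((m.+1 + i0)%N == i) = false); last first.
    by apply/negbTE; rewrite eq_sym neq_ltn (leq_trans (_ : i < m.+1)%N) ?leq_addr.
  rewrite add0r eqn_add2l.
  have [->|ij] := eqVneq (i0 : nat) j.
    rewrite (@sum_delta _ (fun a => del a j) i) ?ltnS //; first by rewrite /del !eqxx.
    by move=> k _ /negbTE ki; rewrite /del ki.
  by rewrite big1 // => k _; rewrite /del (negbTE ij) andbF.
have -> : \sum_(i < m.+1) pi m i * b i - \sum_(j < n.+1) pi n j * - b (m.+1 + j)%N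
    = \sum_(k < m.+1 + n.+1) b k * x0 k.
  rewrite split_sum -sumrN; congr (_ + _); apply: eq_bigr => k _.
    by rewrite /x0 ltn_ord mulrC.
  by rewrite /x0 ltnNge leq_addr /= addKn mulrN opprK mulrC.
rewrite Hb2; apply: PP_ge => z Hz.
have [z' [Cz' Hz']] := @repair z Hz.
apply: le_trans (tc_le _ Cz') _; apply: le_trans Hz' _.
rewrite /FF /err lerD2l; apply: lerD; apply: ler_sum => k _.
  by rewrite /x0 ltn_ord.
by rewrite /x0 ltnNge leq_addr /= addKn.
Qed.

End Transport.
Arguments tc {R} pi m n c.
Arguments cost {R} m n c z.
Arguments TD {R pi} pi_ge0 pi_sum1 {m n c} c_ge0 c_le1.
Arguments pot_le {R pi} pi_ge0 pi_sum1 {m n c u v} _.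
Arguments tc_le {R pi m n c} c_ge0 {z} _.
Arguments tc_ge {R pi} pi_ge0 pi_sum1 {m n c L} _.
Arguments tc_ge0 {R pi} pi_ge0 pi_sum1 {m n c} c_ge0.
Arguments tc_le1 {R pi} pi_ge0 pi_sum1 {m n c} c_ge0 c_le1.
Arguments sum_delta {R} N f a _ _.


Section Dist.
Variable R : realType.
Variable pi : nat -> nat -> R.
Hypothesis pi_ge0 : forall n i, 0 <= pi n i.
Hypothesis pi_sum1 : forall n, \sum_(i < n.+1) pi n i = 1.

Fixpoint finf n (f : nat -> R) := if n is n'.+1 then Num.min (finf n' f) (f n) else f 0%N.

Lemma finf_le n f j : (j <= n)%N -> finf n f <= f j.
Proof.
elim: n j => [|n IH] j jn.
  by move: jn; rewrite leqn0 => /eqP ->.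
rewrite /= ge_min; move: jn; rewrite leq_eqVlt => /orP[/eqP->|jn].
  by rewrite lexx orbT.
by rewrite IH.
Qed.

Lemma finf_ge n f L : (forall j, (j <= n)%N -> L <= f j) -> L <= finf n f.
Proof.
elim: n => [|n IH] H; first by apply: H.
rewrite /= le_min; apply/andP; split; last exact: H.
by apply: IH => j jn; apply: H; apply: leq_trans jn _.
Qed.

Notation D := (dshift pi).

Lemma Dtab_le m a b : (a <= m)%N -> Dtab pi m a b = D a b.
Proof.
elim: m => [|m IH] am.
  by move: am; rewrite leqn0 => /eqP ->.
rewrite /=; case: ifP => [h|h]; first exact: IH.
have -> : a = m.+1 by apply/eqP; rewrite eqn_leq am leqNgt ltnS h.
by rewrite /dshift /= ltnn.
Qed.

Lemma D00 : D 0 0 = 0. Proof. by []. Qed.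
Lemma D0S b : D 0 b.+1 = 1. Proof. by []. Qed.
Lemma DS0 a : D a.+1 0 = 1. Proof. by rewrite /dshift /= ltnn. Qed.

Lemma DSS m n : D m.+1 n.+1 = tc pi m n D.
Proof.
rewrite /dshift /= ltnn /tc /cost; congr (inf (image _ _)).
apply: funext => z; apply: eq_bigr => i _; apply: eq_bigr => j _.
by rewrite Dtab_le // leq_ord.
Qed.

Lemma D_bounds a b : 0 <= D a b <= 1.
Proof.
elim/ltn_ind: a b => a IH b.
case: a IH => [|m] IH; first by case: b => [|b]; rewrite ?D00 ?D0S ?lexx ?ler01.
case: b => [|n]; first by rewrite DS0 ler01 lexx.
have c0 : forall i j, (i <= m)%N -> (j <= n)%N -> 0 <= D i j.
  by move=> i j im _; case/andP: (IH i (im : (i < m.+1)%N) j).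
have c1 : forall i j, (i <= m)%N -> (j <= n)%N -> D i j <= 1.
  by move=> i j im _; case/andP: (IH i (im : (i < m.+1)%N) j).
by rewrite DSS (tc_ge0 pi_ge0 pi_sum1 c0) (tc_le1 pi_ge0 pi_sum1 c0 c1).
Qed.

Lemma D_ge0 a b : 0 <= D a b. Proof. by case/andP: (D_bounds a b). Qed.
Lemma D_le1 a b : D a b <= 1. Proof. by case/andP: (D_bounds a b). Qed.

Lemma D_diag a : D a a = 0.
Proof.
elim/ltn_ind: a => a IH; case: a IH => [|m] IH; first by [].
apply/eqP; rewrite eq_le D_ge0 andbT DSS.
pose zd := fun i j => if i == j then pi m i else 0.
have Czd : coupling pi m m zd.
  split; [|split].
  - by move=> i j _ _; rewrite /zd; case: eqP.
  - move=> i im; rewrite (@sum_delta _ _ (fun j => zd i j) i) /zd ?eqxx //.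
    by move=> k _; rewrite eq_sym => /negbTE ->.
  - move=> j jm; rewrite (@sum_delta _ _ (fun i => zd i j) j) /zd ?eqxx //.
    by move=> k _ /negbTE ->.
apply: le_trans (tc_le (fun i j _ _ => D_ge0 i j) Czd) _.
rewrite /cost big1 // => i _.
rewrite (@sum_delta _ _ (fun j => zd i j * D i j) i) /zd ?eqxx ?IH ?mulr0 //.
by move=> k _; rewrite eq_sym => /negbTE ->; rewrite mul0r.
Qed.

Lemma D_sym a b : D a b = D b a.
Proof.
suff H : forall N a b, (a <= N)%N -> (b <= N)%N -> D a b = D b a.
  by apply: (H (maxn a b)); rewrite ?leq_maxl ?leq_maxr.
elim=> [|N IH] {}a {}b.
  by rewrite !leqn0 => /eqP -> /eqP ->.
case: a => [|m]; case: b => [|n] //; rewrite ?D0S ?DS0 // !ltnS => mN nN.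
have sym_le : forall p q, (p <= N)%N -> (q <= N)%N -> tc pi q p D <= tc pi p q D.
  move=> p q pN qN; apply: (tc_ge pi_ge0 pi_sum1) => z [Hz [Hr Hc]].
  have Czt : coupling pi q p (fun i j => z j i).
    by split; [move=> i j ? ?; apply: Hz|split; [move=> i ?; apply: Hc|move=> j ?; apply: Hr]].
  apply: le_trans (tc_le (fun i j _ _ => D_ge0 i j) Czt) _.
  rewrite /cost exchange_big /= le_eqVlt; apply/orP; left; apply/eqP.
  apply: eq_bigr => i _; apply: eq_bigr => j _; rewrite IH //.
    by apply: leq_trans (leq_ord j) qN.
  by apply: leq_trans (leq_ord i) pN.
by rewrite !DSS; apply/eqP; rewrite eq_le !sym_le.
Qed.

Definition ctr n (v : nat -> R) l := finf n (fun j => v j + D l j).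

Lemma ctr_ge m n u v : (forall i j, (i <= m)%N -> (j <= n)%N -> u i - v j <= D i j) ->
  forall i, (i <= m)%N -> u i <= ctr n v i.
Proof. by move=> H i im; apply: finf_ge => j jn; have := H i j im jn; lra. Qed.

Lemma ctr_le n v j : (j <= n)%N -> ctr n v j <= v j.
Proof. by move=> jn; rewrite /ctr; apply: le_trans (finf_le _ _ _ jn) _; rewrite /= D_diag addr0. Qed.

Lemma ctr_lip n v l l' : (forall j, (j <= n)%N -> D l j <= D l l' + D l' j) ->
  ctr n v l - ctr n v l' <= D l l'.
Proof.
move=> H; suff : ctr n v l - D l l' <= ctr n v l' by lra.
apply: finf_ge => j jn; have := @finf_le n (fun j => v j + D l j) j jn; have := H j jn.
rewrite /ctr; lra.
Qed.

Lemma pot_ge m n u v (b : nat -> R) :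
  (forall i, (i <= m)%N -> u i <= b i) -> (forall j, (j <= n)%N -> b j <= v j) ->
  \sum_(i < m.+1) pi m i * u i - \sum_(j < n.+1) pi n j * v j <=
  \sum_(i < m.+1) pi m i * b i - \sum_(j < n.+1) pi n j * b j.
Proof.
move=> Hu Hv; apply: lerB; apply: ler_sum => i _; apply: ler_wpM2l => //.
  exact: Hu (leq_ord i).
exact: Hv (leq_ord i).
Qed.

Lemma D_tri a b c : D a c <= D a b + D b c.
Proof.
suff H : forall N a b c, (a <= N)%N -> (b <= N)%N -> (c <= N)%N -> D a c <= D a b + D b c.
  by apply: (H (maxn a (maxn b c))); rewrite ?leq_maxl // (leq_trans _ (leq_maxr _ _)) ?leq_maxl ?leq_maxr.
elim=> [|N IH] {}a {}b {}c.
  by rewrite !leqn0 => /eqP -> /eqP -> /eqP ->; rewrite D00 addr0.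
have [->|ac] := eqVneq a c; first by rewrite D_diag addr_ge0 ?D_ge0.
case: a ac => [|m] ac.
  case: c ac => [|n] // _ _ _ _; rewrite D0S.
  case: b => [|k]; first by rewrite D0S D00 add0r.
  by rewrite D0S lerDl D_ge0.
case: c ac => [|n] ac.
  move=> _ _ _; rewrite DS0; case: b => [|k]; first by rewrite DS0 lerDl D_ge0.
  by rewrite DS0 lerDr D_ge0.
case: b => [|k].
  by move=> _ _ _; rewrite DS0 D0S; apply: le_trans (D_le1 _ _) _; lra.
rewrite !ltnS => mN kN nN.
have c0 : forall i j, (i <= m)%N -> (j <= n)%N -> 0 <= D i j by move=> *; apply: D_ge0.
have c1 : forall i j, (i <= m)%N -> (j <= n)%N -> D i j <= 1 by move=> *; apply: D_le1.
have [u [v [Huv Htc]]] := TD pi_ge0 pi_sum1 c0 c1.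
pose bb := ctr n v.
have lipb : forall i j, (i <= N)%N -> (j <= N)%N -> bb i - bb j <= D i j.
  move=> i j iN jN; apply: ctr_lip => l ln; apply: IH => //.
  exact: leq_trans ln nN.
rewrite !DSS; apply: le_trans Htc _.
apply: le_trans (@pot_ge _ _ _ _ bb (@ctr_ge _ _ _ _ Huv) (@ctr_le n v)) _.
have e : forall x y z : R, x - z = (x - y) + (y - z) by move=> *; lra.
rewrite (e _ (\sum_(j < k.+1) pi k j * bb j)); apply: lerD.
  apply: (pot_le pi_ge0 pi_sum1) => i j im jk; apply: lipb.
    exact: leq_trans im mN.
  exact: leq_trans jk kN.
apply: (pot_le pi_ge0 pi_sum1) => i j ik jn; apply: lipb.
  exact: leq_trans ik kN.
exact: leq_trans jn nN.
Qed.

Lemma pot m n : exists b : nat -> R, (forall i, 0 <= b i <= 1) /\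
  (forall i j, b i - b j <= D i j) /\
  D m.+1 n.+1 <= \sum_(i < m.+1) pi m i * b i - \sum_(j < n.+1) pi n j * b j.
Proof.
have c0 : forall i j, (i <= m)%N -> (j <= n)%N -> 0 <= D i j by move=> *; apply: D_ge0.
have c1 : forall i j, (i <= m)%N -> (j <= n)%N -> D i j <= 1 by move=> *; apply: D_le1.
have [u [v [Huv Htc]]] := TD pi_ge0 pi_sum1 c0 c1.
pose bb := ctr n v.
have lipb : forall i j, bb i - bb j <= D i j.
  by move=> i j; apply: ctr_lip => l _; apply: D_tri.
pose L := inf [set bb l | l in [set: nat]].
have L_le l : L <= bb l.
  apply: (inf_le_img (bb 0%N - 1)) => // l' _.
  by have := lipb 0%N l'; have := D_le1 0%N l'; lra.
have L_ge l : bb l - 1 <= L.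
  apply: (le_inf_img 0%N) => // l' _.
  by have := lipb l l'; have := D_le1 l l'; lra.
exists (fun l => bb l - L); split; [|split].
- by move=> i; apply/andP; split; [rewrite subr_ge0 | have := L_ge i; lra].
- by move=> i j; have := lipb i j; lra.
have sh k : \sum_(i < k.+1) pi k i * (bb i - L) = \sum_(i < k.+1) pi k i * bb i - L.
  by rewrite (eq_bigr (fun i : 'I_k.+1 => pi k i * bb i - pi k i * L)) ?sumrB -?mulr_suml ?pi_sum1 ?mul1r // => i _; rewrite mulrBr.
rewrite !sh (_ : forall x y : R, x - L - (y - L) = x - y); last by move=> *; lra.
rewrite DSS; apply: le_trans Htc _.
exact: (@pot_ge _ _ _ _ _ (@ctr_ge _ _ _ _ Huv) (@ctr_le n v)).
Qed.

End Dist.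
Arguments D_ge0 {R pi} pi_ge0 pi_sum1 a b.
Arguments D_le1 {R pi} pi_ge0 pi_sum1 a b.
Arguments D_diag {R pi} pi_ge0 pi_sum1 a.
Arguments D_sym {R pi} pi_ge0 pi_sum1 a b.
Arguments D_tri {R pi} pi_ge0 pi_sum1 a b c.
Arguments pot {R pi} pi_ge0 pi_sum1 m n.
Arguments DSS {R pi} m n.


Section Main.
Variable R : realType.
Variable pi : nat -> nat -> R.
Hypothesis pi_ge0 : forall n i, 0 <= pi n i.
Hypothesis pi_sum1 : forall n, \sum_(i < n.+1) pi n i = 1.

Notation D := (dshift pi).
Notation D_ge0 := (D_ge0 pi_ge0 pi_sum1).
Notation D_le1 := (D_le1 pi_ge0 pi_sum1).
Notation D_diag := (D_diag pi_ge0 pi_sum1).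
Notation D_sym := (D_sym pi_ge0 pi_sum1).
Notation D_tri := (D_tri pi_ge0 pi_sum1).

Definition Rn q := \sum_(i < q.+1) pi q i * D i q.+1.

Definition Pk (k : Idx) (b : nat -> R) :=
  [/\ (forall i, 0 <= b i <= 1), (forall i j, b i - b j <= D i j),
      D (sval k).1.+1 (sval k).2.+1 <=
        \sum_(i < (sval k).1.+1) pi (sval k).1 i * b i - \sum_(j < (sval k).2.+1) pi (sval k).2 j * b j
    & (sval k).1 = (sval k).2 -> Rn (sval k).2 <= \sum_(i < (sval k).2.+1) pi (sval k).2 i * b i - b (sval k).2.+1].

Lemma ex_pot k : exists b, Pk k b.
Proof.
case: k => [[p q] /= pq]; rewrite /Pk /=.
have [<-|pnq] := eqVneq p q.
  exists (fun i => D i p.+1); split.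
  - by move=> i; rewrite D_ge0 D_le1.
  - by move=> i j; have := D_tri i j p.+1; lra.
  - by rewrite subrr D_diag.
  - by move=> _; rewrite D_diag subr0.
have [b [Hb1 [Hb2 Hb3]]] := pot pi_ge0 pi_sum1 p q.
by exists b; split => // pq'; rewrite pq' eqxx in pnq.
Qed.

Definition potf k := projT1 (cid (ex_pot k)).
Lemma potP k : Pk k (potf k). Proof. exact: projT2 (cid (ex_pot k)). Qed.

Definition y (i : nat) : Idx -> R := fun k => potf k i.
Definition x (p : nat) : Idx -> R := fun k => \sum_(i < p.+1) pi p i * y i k.
Definition clip (a : R) := Num.max 0 (Num.min 1 a).
Definition T (z : Idx -> R) : Idx -> R :=
  fun k => clip (inf [set y n.+1 k + dinf z (x n) | n in [set: nat]]).

Lemma y_in i : inC (y i).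
Proof. by move=> k; case: (potP k) => H _ _ _; apply: H. Qed.

Lemma y_lip i j k : y i k - y j k <= D i j.
Proof. by case: (potP k) => _ H _ _; apply: H. Qed.

Lemma y_lipn i j k : `|y i k - y j k| <= D i j.
Proof.
rewrite ler_norml; have := y_lip i j k; have := y_lip j i k; rewrite (D_sym j i); lra.
Qed.

Lemma x_in p : inC (x p).
Proof.
move=> k; apply/andP; split; first by apply: sumr_ge0 => i _; rewrite mulr_ge0 //; case/andP: (y_in i k).
rewrite -(pi_sum1 p); apply: ler_sum => i _; apply: ler_piMr => //.
by case/andP: (y_in i k).
Qed.

Lemma x_diff p q k : x p k - x q k <= D p.+1 q.+1.
Proof.
rewrite DSS //; apply: (pot_le pi_ge0 pi_sum1) => i j _ _; exact: y_lip.
Qed.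

Definition k0 : Idx := exist _ (0%N, 0%N) (leqnn 0).

Lemma dinf_ge (z w : Idx -> R) k : inC z -> inC w -> `|z k - w k| <= dinf z w.
Proof.
move=> Hz Hw; rewrite /dinf; apply: (@le_sup_img _ _ _ (fun k1 => `|z k1 - w k1|) k 1) => // k' _.
have := Hz k'; have := Hw k'; case/andP => ? ? /andP [? ?].
rewrite ler_norml; lra.
Qed.

Arguments dinf_ge {z w} k.

Lemma dinf_le (z w : Idx -> R) U : (forall k, `|z k - w k| <= U) -> dinf z w <= U.
Proof. by move=> H; rewrite /dinf; apply: (sup_le_img k0). Qed.

Lemma dinf_ge0 (z w : Idx -> R) : inC z -> inC w -> 0 <= dinf z w.
Proof. by move=> Hz Hw; apply: le_trans (dinf_ge k0 Hz Hw). Qed.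

Lemma dinf_sym (z w : Idx -> R) : dinf z w = dinf w z.
Proof.
rewrite /dinf; congr (sup (image _ _)); apply: funext => k; exact: distrC.
Qed.

Lemma dinf_tri (z w v : Idx -> R) : inC z -> inC w -> inC v -> dinf z v <= dinf z w + dinf w v.
Proof.
move=> Hz Hw Hv; apply: dinf_le => k.
apply: le_trans (_ : `|z k - w k| + `|w k - v k| <= _); last first.
  by apply: lerD; apply: dinf_ge.
by rewrite (_ : z k - v k = (z k - w k) + (w k - v k)) ?ler_normD //; lra.
Qed.

Arguments dinf_tri {z w v}.

Lemma dist p q : dinf (x p) (x q) = D p.+1 q.+1.
Proof.
apply/eqP; rewrite eq_le; apply/andP; split.
  apply: dinf_le => k; rewrite ler_norml.
  have := x_diff p q k; have := x_diff q p k; rewrite (D_sym q.+1); lra.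
have [pq|qp|->] := ltngtP p q.
- pose k := exist (fun pq : nat * nat => (pq.1 <= pq.2)%N) (p, q) (ltnW pq) : Idx.
  apply: le_trans (dinf_ge k (x_in p) (x_in q)).
  case: (potP k) => _ _ /= H _; apply: le_trans H _; exact: ler_norm.
- pose k := exist (fun pq : nat * nat => (pq.1 <= pq.2)%N) (q, p) (ltnW qp) : Idx.
  apply: le_trans (dinf_ge k (x_in p) (x_in q)).
  case: (potP k) => _ _ /= H _; rewrite D_sym; apply: le_trans H _.
  by rewrite distrC; exact: ler_norm.
- by rewrite D_diag; apply: dinf_ge0; apply: x_in.
Qed.

Lemma clip_cases a : (a <= 0 /\ clip a = 0) \/ (0 <= a /\ a <= 1 /\ clip a = a) \/
   (1 <= a /\ clip a = 1).
Proof.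
rewrite /clip; case: (leP 1 a) => h1.
  right; right; split => //; case: (leP 0 1) => h2 //; lra.
case: (leP 0 a) => h2.
  by right; left; split => //; split => //; apply: ltW.
by left; split => //; apply: ltW.
Qed.

Lemma clip_id a : 0 <= a <= 1 -> clip a = a.
Proof.
case/andP => a0 a1; case: (clip_cases a) => [[h ->]|[[h [h' ->]]|[h ->]]] //; lra.
Qed.

Lemma clip_in a : 0 <= clip a <= 1.
Proof.
apply/andP; case: (clip_cases a) => [[h ->]|[[h [h' ->]]|[h ->]]]; split => //; lra.
Qed.

Lemma clip_lip a b e : a <= b + e -> 0 <= e -> clip a <= clip b + e.
Proof.
move=> H e0.
case: (clip_cases a) => [[h ->]|[[h [h' ->]]|[h ->]]];
case: (clip_cases b) => [[g ->]|[[g [g' ->]]|[g ->]]]; lra.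
Qed.

Lemma Tx p : T (x p) = y p.+1.
Proof.
apply: funext => k; rewrite /T.
have lb : forall n, [set: nat] n -> 0 <= y n.+1 k + dinf (x p) (x n).
  by move=> n _; rewrite dist addr_ge0 ?D_ge0 //; case/andP: (y_in n.+1 k).
rewrite (_ : inf _ = y p.+1 k) ?clip_id ?y_in //.
apply/eqP; rewrite eq_le; apply/andP; split.
  apply: le_trans (inf_le_img 0 lb (I : [set: nat] p)) _.
  by rewrite dist D_diag addr0.
apply: (le_inf_img 0%N) => // n _.
rewrite dist; have := y_lip p.+1 n.+1 k; lra.
Qed.

Lemma T_in z : inC (T z).
Proof. by move=> k; apply: clip_in. Qed.

Lemma T_nonexp z w : inC z -> inC w -> dinf (T z) (T w) <= dinf z w.
Proof.
move=> Hz Hw.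
have side : forall z w, inC z -> inC w -> forall k,
    T z k <= T w k + dinf z w.
  move=> {}z {}w {}Hz {}Hw k; apply: clip_lip; last exact: dinf_ge0.
  rewrite -lerBlDr; apply: (le_inf_img 0%N) => // n _.
  rewrite lerBlDr.
  have lb : forall n, [set: nat] n -> 0 <= y n.+1 k + dinf z (x n).
    move=> n' _; apply: addr_ge0; first by case/andP: (y_in n'.+1 k).
    by apply: dinf_ge0 => //; apply: x_in.
  apply: le_trans (inf_le_img 0 lb (I : [set: nat] n)) _.
  have := dinf_tri Hz Hw (x_in n); lra.
apply: dinf_le => k; rewrite ler_norml.
have := side z w Hz Hw k; have := side w z Hw Hz k; rewrite (dinf_sym w z); lra.
Qed.

Lemma Rn_dist n : dinf (x n) (T (x n)) = Rn n.
Proof.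
rewrite Tx.
have E k : x n k - y n.+1 k = \sum_(i < n.+1) pi n i * (y i k - y n.+1 k).
  have -> : \sum_(i < n.+1) pi n i * (y i k - y n.+1 k) =
      \sum_(i < n.+1) pi n i * y i k - \sum_(i < n.+1) pi n i * y n.+1 k.
    by rewrite -sumrB; apply: eq_bigr => i _; rewrite mulrBr.
  by rewrite -mulr_suml pi_sum1 mul1r.
apply/eqP; rewrite eq_le; apply/andP; split.
  apply: dinf_le => k; rewrite E.
  apply: le_trans (ler_norm_sum _ _ _) _; apply: ler_sum => i _.
  rewrite normrM ger0_norm // ler_wpM2l //; exact: y_lipn.
pose k := exist (fun pq : nat * nat => (pq.1 <= pq.2)%N) (n, n) (leqnn n) : Idx.
apply: le_trans (dinf_ge k (x_in n) (y_in n.+1)).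
case: (potP k) => _ _ _ /= /(_ erefl) H; apply: le_trans H _.
exact: ler_norm.
Qed.

End Main.

Local Close Scope classical_set_scope.

Theorem theorem3 (R : realType) (pi : nat -> nat -> R)
  (pi_ge0 : forall n i, 0 <= pi n i)
  (pi_supp : forall n i, (n < i)%N -> pi n i = 0)
  (pi_sum1 : forall n, \sum_(i < n.+1) pi n i = 1)
  (pi_inj : forall m n, m <> n -> pi m <> pi n) :
  exists (T : (Idx -> R) -> (Idx -> R)) (y0 : Idx -> R) (x : nat -> (Idx -> R)),
    [/\ (forall z, inC z -> inC (T z)) /\ nonexpansive_on_C T,
        inC y0 /\ (forall n, inC (x n)),
        (forall n, (1 <= n)%N ->
           x n = (fun k => \sum_(i < n.+1)
                    pi n i * (if nat_of_ord i is i'.+1 then T (x i') k else y0 k))),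
        (forall m n, dinf (x m) (x n) = dmn pi m n)
      & (condH pi ->
         forall n, dinf (x n) (T (x n)) = \sum_(i < n.+1) pi n i * dshift pi i n.+1)].
Proof.
exists (@T R pi pi_ge0 pi_sum1), (@y R pi pi_ge0 pi_sum1 0), (@x R pi pi_ge0 pi_sum1); split.
- split; first by move=> z _; exact: T_in.
  by move=> z w Hz Hw; exact: T_nonexp.
- by split; [exact: y_in | exact: x_in].
- move=> n _; apply: funext => k; rewrite {1}/x; apply: eq_bigr => -[[|i'] hi] _ //=.
  by rewrite Tx.
- by move=> m n; rewrite /dmn; exact: dist.
- by move=> _ n; exact: Rn_dist.
Qed.
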